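(* The edge generating series of the Fibonacci posets is $$\sum_{n\ge0}\ell(\mathcal{F}_n)x^n=\frac{x^2}{(1-x-x^2)^2},$$ and for every $n\ge0$, $\ell(\mathcal{F}_n)=\frac{nL_n-F_n}{5}$. Moreover $\ell(\mathcal{F}_n)\sim\frac n5\varphi^n$ and $i(\mathcal{F}_n)\sim\frac{n}{\sqrt5\,\varphi}$, where $\varphi=(1+\sqrt5)/2$.
   Context: Steps: $U=(1,1)$, $D=(1,-1)$, $H=(1,0)$. A Fibonacci path of length $n$ is a lattice path from $(0,0)$ to $(n,0)$ with steps $U,D,H$ that stays in the strip $0\le y\le1$ and whose $H$ steps all lie on the $x$-axis. $\mathcal{F}_n$ is the set of Fibonacci paths of length $n$, partially ordered by $\gamma_1\le\gamma_2$ iff $\gamma_1$ lies weakly below $\gamma_2$. $\ell(P)$ is the number of edges (covering pairs) of the Hasse diagram of a finite poset $P$ and $i(P)=\ell(P)/|P|$. $F_n$ are the Fibonacci numbers ($F_0=0$, $F_1=1$, $F_{n+2}=F_{n+1}+F_n$) and $L_n$ the Lucas numbers ($L_0=2$, $L_1=1$, $L_{n+2}=L_{n+1}+L_n$). $a_n\sim b_n$ means $a_n/b_n\to1$. *)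

(* Defs.v *)
From Stdlib Require Import Reals Lra Lia Arith List Bool.
Import ListNotations.
Open Scope R_scope.

(** Steps U=(1,1), D=(1,-1), H=(1,0). A path is its word of steps. *)
Inductive step : Set := U | D | H.

Definition step_eqb (a b : step) : bool :=
  match a, b with
  | U, U | D, D | H, H => true
  | _, _ => false
  end.

(** [fib_ok h w]: starting at height [h], the path [w] stays in the strip
    0 <= y <= 1, every H step lies on the x-axis, and it ends on the x-axis. *)
Fixpoint fib_ok (h : nat) (w : list step) : bool :=
  match w with
  | [] => Nat.eqb h 0
  | U :: w' => Nat.eqb h 0 && fib_ok 1 w'
  | D :: w' => Nat.eqb h 1 && fib_ok 0 w'
  | H :: w' => Nat.eqb h 0 && fib_ok 0 w'
  end.

(** Heights of the path at the integer abscissae 0,1,...,length w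
    (integer heights, since the path stays at y in {0,1}, i.e. never goes
    below 0 when fib_ok holds; D from height 0 never occurs). *)
Fixpoint heights (h : nat) (w : list step) : list nat :=
  h :: match w with
       | [] => []
       | U :: w' => heights (S h) w'
       | D :: w' => heights (Nat.pred h) w'
       | H :: w' => heights h w'
       end.

Fixpoint words (n : nat) : list (list step) :=
  match n with
  | O => [[]]
  | S m => flat_map (fun w => [U :: w; D :: w; H :: w]) (words m)
  end.

Definition fib_paths (n : nat) : list (list step) :=
  filter (fib_ok 0) (words n).

(** g1 <= g2 iff g1 lies weakly below g2. Both paths are piecewise linear
    with vertices at integer abscissae, so this is the pointwise comparison
    of heights at the integer points. *)
Fixpoint list_leb (a b : list nat) : bool :=
  match a, b with
  | [], [] => true
  | x :: a', y :: b' => Nat.leb x y && list_leb a' b'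
  | _, _ => false
  end.

Definition path_le (g1 g2 : list step) : bool :=
  list_leb (heights 0 g1) (heights 0 g2).

Definition path_eqb (g1 g2 : list step) : bool :=
  (Nat.eqb (length g1) (length g2)) &&
  forallb (fun p => step_eqb (fst p) (snd p)) (combine g1 g2).

Definition path_lt (g1 g2 : list step) : bool :=
  path_le g1 g2 && negb (path_eqb g1 g2).

Definition covers (n : nat) (g1 g2 : list step) : bool :=
  path_lt g1 g2 &&
  forallb (fun g => negb (path_lt g1 g && path_lt g g2)) (fib_paths n).

Definition ell (n : nat) : nat :=
  length (filter (fun p => covers n (fst p) (snd p))
                 (list_prod (fib_paths n) (fib_paths n))).

Definition iF (n : nat) : R := INR (ell n) / INR (length (fib_paths n)).

Fixpoint fib (n : nat) : nat :=
  match n with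
  | O => 0%nat
  | S m => match m with O => 1%nat | S k => (fib m + fib k)%nat end
  end.

Fixpoint lucas (n : nat) : nat :=
  match n with
  | O => 2%nat
  | S m => match m with O => 1%nat | S k => (lucas m + lucas k)%nat end
  end.

Definition phi : R := (1 + sqrt 5) / 2.

Definition asymp (a b : nat -> R) : Prop := Un_cv (fun n => a n / b n) 1.

(* Main.v *)
Require Import Defs.
From Stdlib Require Import Reals Lra Lia Arith List Bool Permutation.
Import ListNotations.
Open Scope R_scope.

Inductive V : list step -> Prop :=
| V0 : V []
| VH : forall w, V w -> V (H :: w)
| VUD : forall w, V w -> V (U :: D :: w).

Lemma fib_ok_V_aux : forall w, (fib_ok 0 w = true -> V w) /\
  (fib_ok 1 w = true -> exists w', w = D :: w' /\ V w').
Proof.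
  induction w as [|a w IH]; simpl.
  - split; intros; [constructor | discriminate].
  - destruct IH as [IH0 IH1]. destruct a; simpl; split; intro Hf; try discriminate.
    + destruct (IH1 Hf) as [w' [-> Hw]]. now constructor.
    + eauto.
    + constructor; auto.
Qed.

Lemma fib_ok_V : forall w, fib_ok 0 w = true <-> V w.
Proof.
  intro w; split; [apply fib_ok_V_aux|].
  induction 1; simpl; auto.
Qed.

Lemma in_words : forall n w, In w (words n) <-> length w = n.
Proof.
  induction n; simpl; intro w.
  - split; [intros [<-|[]]; auto | destruct w; simpl; auto; discriminate].
  - rewrite in_flat_map. split.
    + intros [x [Hx Hin]]. apply IHn in Hx.
      simpl in Hin; destruct Hin as [<-|[<-|[<-|[]]]]; simpl; lia.
    + destruct w as [|a w]; simpl; [discriminate|]. intro Hl.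
      exists w; split; [apply IHn; lia|]. destruct a; simpl; auto.
Qed.

Lemma nodup_words : forall n, NoDup (words n).
Proof.
  induction n; simpl. { repeat constructor; simpl; tauto. }
  induction (words n) as [|x l IHl]; simpl. constructor.
  inversion IHn; subst.
  apply (NoDup_app (l1 := [U::x; D::x; H::x])).
  - repeat constructor; simpl; intuition discriminate.
  - auto.
  - intros a Ha Hb. apply in_flat_map in Hb. destruct Hb as [y [Hy Hin]].
    simpl in Ha, Hin.
    destruct Ha as [<-|[<-|[<-|[]]]]; destruct Hin as [E|[E|[E|[]]]];
      injection E; intros; subst; try discriminate; contradiction.
Qed.

Lemma in_fib_paths : forall n w, In w (fib_paths n) <-> length w = n /\ V w.
Proof.
  intros. unfold fib_paths. rewrite filter_In, in_words, fib_ok_V. tauto.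
Qed.

Lemma nodup_fib_paths : forall n, NoDup (fib_paths n).
Proof. intro; apply NoDup_filter, nodup_words. Qed.

Definition ud (w : list step) := U :: D :: w.

Fixpoint fp (n : nat) : list (list step) :=
  match n with
  | O => [[]]
  | S m => map (cons H) (fp m) ++ match m with O => [] | S k => map ud (fp k) end
  end.

Lemma fp_props : forall n, (forall w, In w (fp n) <-> length w = n /\ V w) /\ NoDup (fp n).
Proof.
  assert (K : forall n, ((forall w, In w (fp n) <-> length w = n /\ V w) /\ NoDup (fp n)) /\
                    ((forall w, In w (fp (S n)) <-> length w = S n /\ V w) /\ NoDup (fp (S n)))).
  2: { intro n; apply K. }
  induction n.
  - split; split.
    + intro w; simpl; split; [intros [<-|[]]; split; [reflexivity|constructor]|].
      intros [Hl _]; destruct w; [auto|discriminate].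
    + repeat constructor; simpl; tauto.
    + intro w; simpl; split; [intros [<-|[]]; split; [reflexivity|repeat constructor]|].
      intros [Hl Hv]; destruct w as [|a [|b w]]; try discriminate; inversion Hv; subst; auto.
    + repeat constructor; simpl; tauto.
  - destruct IHn as [[I0 N0] [I1 N1]]. split; [split; auto|]. split.
    + intro w. change (fp (S (S n))) with (map (cons H) (fp (S n)) ++ map ud (fp n)).
      rewrite in_app_iff, !in_map_iff. split.
      * intros [[x [<- Hx]]|[x [<- Hx]]]; [apply I1 in Hx|apply I0 in Hx]; destruct Hx;
        simpl; split; try lia; constructor; auto.
      * intros [Hl Hv]. inversion Hv; subst.
        -- discriminate.
        -- left. exists w0; split; auto. apply I1; simpl in Hl; split; [lia|auto].
        -- right. exists w0; split; auto. apply I0; simpl in Hl; split; [lia|auto].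
    + change (fp (S (S n))) with (map (cons H) (fp (S n)) ++ map ud (fp n)).
      apply NoDup_app.
      * apply FinFun.Injective_map_NoDup; auto. intros x y E; injection E; auto.
      * apply FinFun.Injective_map_NoDup; auto. intros x y E; injection E; auto.
      * intros a Ha Hb. apply in_map_iff in Ha, Hb.
        destruct Ha as [x [<- _]]; destruct Hb as [y [E _]]; discriminate.
Qed.

Lemma perm_fp : forall n, Permutation (fib_paths n) (fp n).
Proof.
  intro n. destruct (fp_props n) as [I N].
  apply NoDup_Permutation; auto using nodup_fib_paths.
  intro; rewrite I, in_fib_paths; tauto.
Qed.


Lemma le_HH : forall a b, path_le (H::a) (H::b) = path_le a b.
Proof. reflexivity. Qed.
Lemma le_UDUD : forall a b, path_le (U::D::a) (U::D::b) = path_le a b.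
Proof. reflexivity. Qed.
Lemma le_HHUD : forall a b, path_le (H::H::a) (U::D::b) = path_le a b.
Proof. reflexivity. Qed.
Lemma le_UDH : forall a b, path_le (U::D::a) (H::b) = false.
Proof. intros a b; destruct b; reflexivity. Qed.
Lemma le_HUDUD : forall a b, path_le (H::U::D::a) (U::D::b) = false.
Proof. intros a b; destruct b; reflexivity. Qed.
Lemma le_nil_cons : forall s w, path_le [] (s::w) = false.
Proof. intros s w; destruct s, w; reflexivity. Qed.
Lemma le_cons_nil : forall s w, path_le (s::w) [] = false.
Proof. intros s w; destruct s, w; reflexivity. Qed.

Lemma list_leb_refl : forall l, list_leb l l = true.
Proof. induction l; simpl; auto. rewrite Nat.leb_refl; auto. Qed.
Lemma le_refl : forall a, path_le a a = true.
Proof. intro; apply list_leb_refl. Qed.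

Lemma eqb_cons : forall x y a b, path_eqb (x::a) (y::b) = (step_eqb x y && path_eqb a b)%bool.
Proof. intros. unfold path_eqb. simpl. destruct (length a =? length b), (step_eqb x y); reflexivity. Qed.

Lemma eqb_iff : forall a b, path_eqb a b = true <-> a = b.
Proof.
  induction a as [|x a IH]; destruct b as [|y b]; try (split; intro; discriminate).
  - split; reflexivity.
  - rewrite eqb_cons, andb_true_iff, IH. split.
    + intros [E1 E2]; subst. destruct x, y; try discriminate; reflexivity.
    + intro E; injection E; intros; subst. destruct y; split; reflexivity.
Qed.

Definition LT a b := path_le a b = true /\ a <> b.
Lemma lt_iff : forall a b, path_lt a b = true <-> LT a b.
Proof.
  intros; unfold path_lt, LT. rewrite andb_true_iff, negb_true_iff.
  destruct (path_eqb a b) eqn:E.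
  - apply eqb_iff in E. split; [intros [_ F]; discriminate | tauto].
  - split; intros [A B]; split; auto. intro; subst. rewrite (proj2 (eqb_iff b b) eq_refl) in E; discriminate.
Qed.

Lemma le_antisym : forall a, V a -> forall b, V b -> path_le a b = true -> path_le b a = true -> a = b.
Proof.
  induction 1 as [|a Va IH|a Va IH]; intros b Vb; destruct Vb as [|b Vb|b Vb]; intros L1 L2; auto;
    try (rewrite ?le_nil_cons, ?le_cons_nil, ?le_UDH in L1; discriminate);
    try (rewrite ?le_nil_cons, ?le_cons_nil, ?le_UDH in L2; discriminate).
  - rewrite le_HH in L1, L2. f_equal; auto.
  - rewrite le_UDUD in L1, L2. do 2 f_equal; auto.
Qed.

Definition step_dec : forall x y : step, {x = y} + {x <> y}.
Proof. decide equality. Defined.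
Definition weq (a b : list step) : bool := if list_eq_dec step_dec a b then true else false.

Fixpoint cov (g1 g2 : list step) : bool :=
  match g1, g2 with
  | H :: a, H :: b => cov a b
  | H :: a, U :: D :: b => weq a (H :: b)
  | U :: D :: a, U :: D :: b => cov a b
  | _, _ => false
  end.

Lemma cov_HUD : forall a b, cov (H::a) (U::D::b) = weq a (H::b).
Proof. reflexivity. Qed.

Lemma cov_sound : forall a, V a -> forall b, V b -> cov a b = true ->
  LT a b /\ (forall g, V g -> ~ (LT a g /\ LT g b)).
Proof.
  induction 1 as [|a Va IH|a Va IH]; intros b Vb; destruct Vb as [|b Vb|b Vb]; simpl; intro C;
    try discriminate.
  - destruct (IH b Vb C) as [[L N] NI]. split.
    + split; [rewrite le_HH; auto| intro E; injection E; auto].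
    + intros g Vg [[L1 N1] [L2 N2]]. destruct Vg as [|c Vc|c Vc].
      * rewrite le_cons_nil in L1; discriminate.
      * rewrite le_HH in L1, L2. apply (NI c Vc); split; split; auto; intro; subst; auto.
      * rewrite le_UDH in L2; discriminate.
  - unfold weq in C. destruct (list_eq_dec step_dec a (H::b)) as [->|]; [|discriminate].
    split.
    + split; [rewrite le_HHUD; apply le_refl| discriminate].
    + intros g Vg [[L1 N1] [L2 N2]]. destruct Vg as [|c Vc|c Vc].
      * rewrite le_cons_nil in L1; discriminate.
      * destruct Vc as [|c Vc|c Vc].
        -- rewrite le_HH, le_cons_nil in L1; discriminate.
        -- rewrite le_HH, le_HH in L1. rewrite le_HHUD in L2.
           apply N1; f_equal; f_equal; apply le_antisym; auto.
        -- rewrite le_HUDUD in L2; discriminate.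
      * rewrite le_HHUD in L1. rewrite le_UDUD in L2. apply N2. f_equal; f_equal; apply le_antisym; auto.
  - destruct (IH b Vb C) as [[L N] NI]. split.
    + split; [rewrite le_UDUD; auto| intro E; injection E; auto].
    + intros g Vg [[L1 N1] [L2 N2]]. destruct Vg as [|c Vc|c Vc].
      * rewrite le_cons_nil in L1; discriminate.
      * rewrite le_UDH in L1; discriminate.
      * rewrite le_UDUD in L1, L2. apply (NI c Vc); split; split; auto; intro; subst; auto.
Qed.

Lemma cov_complete : forall a, V a -> forall b, V b -> length a = length b -> LT a b -> cov a b = false ->
  exists g, V g /\ length g = length a /\ LT a g /\ LT g b.
Proof.
  induction 1 as [|a Va IH|a Va IH]; intros b Vb; destruct Vb as [|b Vb|b Vb]; simpl;
    intros Hl [L N] C; try discriminate.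
  - contradiction.
  - rewrite le_HH in L. destruct (IH b Vb ltac:(lia)) as [g [Vg [Lg [[L1 N1] [L2 N2]]]]];
      [split; auto; intro; subst; auto| auto|].
    exists (H::g). split; [constructor; auto|]. split; [simpl; lia|].
    split; split; try (rewrite le_HH; auto); intro E; injection E; auto.
  - destruct Va as [|a Va|a Va].
    + simpl in Hl; lia.
    + rewrite le_HHUD in L. exists (H::H::b). split; [repeat constructor; auto|].
      split; [simpl in *; lia|]. split; split.
      * rewrite le_HH, le_HH; auto.
      * intro E; injection E; intro; subst. unfold weq in C.
        destruct (list_eq_dec step_dec (H::b) (H::b)); [discriminate|auto].
      * rewrite le_HHUD; apply le_refl.
      * discriminate.
    + rewrite le_HUDUD in L; discriminate.
  - rewrite le_UDH in L; discriminate.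
  - rewrite le_UDUD in L. destruct (IH b Vb ltac:(lia)) as [g [Vg [Lg [[L1 N1] [L2 N2]]]]];
      [split; auto; intro; subst; auto| auto|].
    exists (U::D::g). split; [constructor; auto|]. split; [simpl; lia|].
    split; split; try (rewrite le_UDUD; auto); intro E; injection E; auto.
Qed.

Lemma covers_cov : forall n a b, In a (fib_paths n) -> In b (fib_paths n) -> covers n a b = cov a b.
Proof.
  intros n a b Ha Hb. apply in_fib_paths in Ha, Hb. destruct Ha as [La Va]; destruct Hb as [Lb Vb].
  unfold covers. destruct (cov a b) eqn:C.
  - destruct (cov_sound a Va b Vb C) as [Lt NI].
    apply andb_true_iff; split; [apply lt_iff; auto|].
    apply forallb_forall. intros g Hg. apply in_fib_paths in Hg. destruct Hg as [_ Vg].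
    apply negb_true_iff. destruct (path_lt a g && path_lt g b) eqn:E; auto.
    apply andb_true_iff in E. rewrite !lt_iff in E. exfalso; exact (NI g Vg E).
  - destruct (path_lt a b) eqn:Lt; auto. simpl. apply lt_iff in Lt.
    destruct (cov_complete a Va b Vb ltac:(lia) Lt C) as [g [Vg [Lg [L1 L2]]]].
    destruct (forallb _ (fib_paths n)) eqn:F; auto.
    rewrite forallb_forall in F. specialize (F g).
    rewrite (proj2 (lt_iff a g) L1), (proj2 (lt_iff g b) L2) in F.
    discriminate F. apply in_fib_paths; split; auto; lia.
Qed.


Fixpoint lsum (l : list nat) : nat := match l with [] => 0%nat | x :: l => (x + lsum l)%nat end.
Definition row a (B : list (list step)) := length (filter (cov a) B).
Definition cnt (A B : list (list step)) := lsum (map (fun a => row a B) A).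

Lemma len_filter_map : forall {X Y} (P : Y -> bool) (g : X -> Y) l,
  length (filter P (map g l)) = length (filter (fun x => P (g x)) l).
Proof. induction l; simpl; auto. destruct (P (g a)); simpl; auto. Qed.

Lemma lsum_app : forall l1 l2, lsum (l1 ++ l2) = (lsum l1 + lsum l2)%nat.
Proof. induction l1; simpl; intros; auto. rewrite IHl1; lia. Qed.

Lemma filter_prod : forall (f : list step -> list step -> bool) A B,
  length (filter (fun p => f (fst p) (snd p)) (list_prod A B)) =
  lsum (map (fun a => length (filter (f a) B)) A).
Proof.
  induction A; intros; simpl; auto.
  rewrite filter_app, length_app, IHA, len_filter_map. reflexivity.
Qed.

Lemma ell_cnt : forall n, ell n = cnt (fib_paths n) (fib_paths n).
Proof.
  intro n. unfold ell. rewrite (filter_ext_in _ (fun p => cov (fst p) (snd p))).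
  - apply filter_prod.
  - intros [a b] Hp. apply in_prod_iff in Hp. destruct Hp. apply covers_cov; auto.
Qed.

Lemma perm_filter : forall {X} (P : X -> bool) l l', Permutation l l' -> Permutation (filter P l) (filter P l').
Proof.
  intros X P l l' Hp; induction Hp; simpl; auto.
  - destruct (P x); auto.
  - destruct (P x), (P y); auto. constructor.
  - eapply perm_trans; eauto.
Qed.

Lemma lsum_perm : forall l l', Permutation l l' -> lsum l = lsum l'.
Proof. intros l l' Hp; induction Hp; simpl; lia. Qed.

Lemma cnt_perm : forall A A' B B', Permutation A A' -> Permutation B B' -> cnt A B = cnt A' B'.
Proof.
  intros. unfold cnt. transitivity (lsum (map (fun a => row a B) A')).
  - apply lsum_perm, Permutation_map; auto.
  - f_equal. apply map_ext. intro a. unfold row. apply Permutation_length, perm_filter; auto.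
Qed.

Lemma weq_count : forall c l, NoDup l -> In c l -> length (filter (weq c) l) = 1%nat.
Proof.
  induction l; intros N I; [destruct I|]. inversion N as [|? ? Hnin Hnd]; subst. simpl.
  unfold weq at 1. destruct (list_eq_dec step_dec c a).
  - subst. simpl. f_equal. clear IHl N Hnd I. induction l as [|b l IHl']; simpl; auto.
    unfold weq at 1. destruct (list_eq_dec step_dec a b).
    + subst. exfalso; apply Hnin; left; auto.
    + apply IHl'. intro; apply Hnin; right; auto.
  - destruct I; [congruence|]. apply IHl; auto.
Qed.

Lemma lsum_const1 : forall {X} (f : X -> nat) l, (forall x, In x l -> f x = 1%nat) -> lsum (map f l) = length l.
Proof. induction l as [|y l IHl]; simpl; intros Hf; auto. rewrite Hf, IHl; auto. Qed.
Lemma lsum_const0 : forall {X} (f : X -> nat) l, (forall x, In x l -> f x = 0%nat) -> lsum (map f l) = 0%nat.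
Proof. induction l as [|y l IHl]; simpl; intros Hf; auto. rewrite Hf, IHl; auto. Qed.

Lemma cnt_rec : forall n, cnt (fp (S (S n))) (fp (S (S n))) =
  (cnt (fp (S n)) (fp (S n)) + length (fp n) + cnt (fp n) (fp n))%nat.
Proof.
  intro n. change (fp (S (S n))) with (map (cons H) (fp (S n)) ++ map ud (fp n)).
  unfold cnt. rewrite map_app, lsum_app, !map_map.
  assert (R1 : forall a B1 B2, row a (B1 ++ B2) = (row a B1 + row a B2)%nat).
  { intros. unfold row. rewrite filter_app, length_app; auto. }
  assert (E1 : map (fun x => row (H :: x) (map (cons H) (fp (S n)) ++ map ud (fp n))) (fp (S n)) =
               map (fun x => (row x (fp (S n)) + length (filter (fun b => weq x (H::b)) (fp n)))%nat) (fp (S n))).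
  { apply map_ext. intro a. rewrite R1. unfold row. rewrite !len_filter_map. reflexivity. }
  assert (E2 : map (fun x => row (ud x) (map (cons H) (fp (S n)) ++ map ud (fp n))) (fp n) =
               map (fun x => row x (fp n)) (fp n)).
  { apply map_ext. intro a. rewrite R1. unfold row. rewrite !len_filter_map.
    assert (Z: forall l, length (filter (fun x => cov (ud a) (H::x)) l) = 0%nat) by (induction l; auto).
    rewrite Z. reflexivity. }
  rewrite E1, E2. clear E1 E2.
  assert (S1 : forall {X} (f g : X -> nat) l, lsum (map (fun x => (f x + g x)%nat) l) = (lsum (map f l) + lsum (map g l))%nat).
  { induction l; simpl; auto. rewrite IHl. lia. }
  rewrite S1. cut (lsum (map (fun x => length (filter (fun b => weq x (H :: b)) (fp n))) (fp (S n))) = length (fp n)).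
  { intro E; rewrite E; lia. }
  destruct (fp_props n) as [I N].
  change (fp (S n)) with (map (cons H) (fp n) ++ match n with O => [] | S k => map ud (fp k) end).
  rewrite map_app, lsum_app, map_map. rewrite lsum_const1.
  - rewrite lsum_const0; [lia|]. destruct n; [intros x []|].
    intros x Hx. apply in_map_iff in Hx. destruct Hx as [y [<- _]].
    rewrite (filter_ext_in _ (fun _ => false)); [clear; induction (fp (S n)); auto|].
    intros; unfold weq; destruct list_eq_dec; [discriminate|auto].
  - intros x Hx. rewrite (filter_ext_in _ (weq x)); [apply weq_count; auto|].
    intros b _. unfold weq. destruct (list_eq_dec step_dec (H::x) (H::b)), (list_eq_dec step_dec x b);
      auto; [injection e; intro; contradiction| subst; contradiction].
Qed.

Lemma len_fp : forall n, length (fp (S n)) = fib (S (S n)) /\ length (fp n) = fib (S n).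
Proof.
  induction n; [split; reflexivity|]. destruct IHn as [A B]. split; auto.
  change (fp (S (S n))) with (map (cons H) (fp (S n)) ++ map ud (fp n)).
  rewrite length_app, !length_map, A, B. simpl. lia.
Qed.

Lemma ell_fp : forall n, ell n = cnt (fp n) (fp n).
Proof. intro; rewrite ell_cnt; apply cnt_perm; apply perm_fp. Qed.

Lemma ell_rec : forall n, ell (S (S n)) = (ell (S n) + ell n + fib (S n))%nat.
Proof.
  intro n. rewrite !ell_fp, cnt_rec, (proj2 (len_fp n)). lia.
Qed.

Lemma ell0 : ell 0 = 0%nat. Proof. vm_compute. reflexivity. Qed.
Lemma ell1 : ell 1 = 0%nat. Proof. vm_compute. reflexivity. Qed.
Lemma card_fib : forall n, length (fib_paths n) = fib (S n).
Proof. intro; rewrite (Permutation_length (perm_fp n)); apply len_fp. Qed.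

From Coquelicot Require Import Coquelicot.
Open Scope R_scope.

Lemma lim_inv_n : is_lim_seq (fun n => / INR n) 0.
Proof.
  pose proof (is_lim_seq_inv INR p_infty is_lim_seq_INR) as K. apply K. discriminate.
Qed.

Lemma bern : forall h, 0 <= h -> forall n, 1 + INR n * h + INR n * (INR n - 1) / 2 * h^2 <= (1+h)^n.
Proof.
  intros h Hh; induction n. { simpl; lra. }
  rewrite S_INR. simpl pow. assert (0 <= INR n) by apply pos_INR.
  assert (0 <= INR n * (INR n - 1) / 2 * h ^ 2 * h).
  { destruct n. simpl; lra. rewrite S_INR. assert (0 <= INR n) by apply pos_INR.
    apply Rmult_le_pos; [|lra]. apply Rmult_le_pos; [|apply pow2_ge_0]. nra. }
  nra.
Qed.

Lemma nlim : forall a, Rabs a < 1 -> is_lim_seq (fun n => INR n * a ^ n) 0.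
Proof.
  intros a Ha. destruct (Req_dec a 0) as [->|Hn0].
  { apply (is_lim_seq_ext_loc (fun _ => 0)); [|apply is_lim_seq_const].
    exists 1%nat; intros n Hn. destruct n; [lia|]. simpl; ring. }
  set (r := Rabs a). assert (Hr : 0 < r) by (apply Rabs_pos_lt; auto).
  set (h := / r - 1).
  assert (Hr1 : r < 1) by exact Ha. assert (Hh : 0 < h). { unfold h. assert (Hi: r * /r = 1) by (field; lra). nra. }
  set (c := 4 / h^2).
  apply (is_lim_seq_le_le_loc (fun n => - (c * / INR n)) _ (fun n => c * / INR n)).
  - exists 2%nat. intros n Hn. apply Rabs_le_between.
    rewrite Rabs_mult, <- RPow_abs, (Rabs_pos_eq (INR n)) by apply pos_INR. fold r.
    assert (HP := bern h (Rlt_le _ _ Hh) n).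
    assert (E : (1+h)^n * r^n = 1).
    { rewrite <- Rpow_mult_distr. unfold h. replace ((1 + (/ r - 1)) * r) with 1 by (field; lra). apply pow1. }
    assert (Hn2 : 2 <= INR n) by (apply (le_INR 2); auto).
    assert (Hrn : 0 < r^n) by (apply pow_lt; auto).
    unfold c. apply (Rmult_le_reg_r (h^2 * INR n * (1+h)^n)).
    { apply Rmult_lt_0_compat; [apply Rmult_lt_0_compat; [apply pow_lt|]|apply pow_lt]; lra. }
    replace (INR n * r ^ n * (h ^ 2 * INR n * (1 + h) ^ n)) with (INR n * INR n * h^2) by
      (replace (INR n * r ^ n * (h ^ 2 * INR n * (1 + h) ^ n)) with (INR n * INR n * h^2 * ((1+h)^n * r^n)) by ring;
       rewrite E; ring).
    replace (4 / h ^ 2 * / INR n * (h ^ 2 * INR n * (1 + h) ^ n)) with (4 * (1+h)^n) by (field; repeat split; lra).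
    assert (0 < h^2) by (apply pow_lt; lra).
    nra.
  - replace (Finite 0) with (Rbar_opp (Rbar_mult c 0)) by (simpl; f_equal; ring).
    apply -> is_lim_seq_opp. apply is_lim_seq_scal_l, lim_inv_n.
  - replace (Finite 0) with (Rbar_mult c 0) by (simpl; f_equal; ring).
    apply is_lim_seq_scal_l, lim_inv_n.
Qed.


Lemma fib_SS : forall n, fib (S (S n)) = (fib (S n) + fib n)%nat. Proof. reflexivity. Qed.
Lemma lucas_SS : forall n, lucas (S (S n)) = (lucas (S n) + lucas n)%nat. Proof. reflexivity. Qed.

Lemma luc_fib : forall n, (lucas (S n) + 2 * lucas n = 5 * fib (S n))%nat.
Proof.
  assert (K : forall n, (lucas (S n) + 2 * lucas n = 5 * fib (S n))%nat /\
                        (lucas (S (S n)) + 2 * lucas (S n) = 5 * fib (S (S n)))%nat).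
  { induction n; [split; reflexivity|]. destruct IHn as [A B]. split; auto.
    rewrite (lucas_SS (S n)), (fib_SS (S n)). pose proof (lucas_SS n). lia. }
  apply K.
Qed.

Lemma ell_nat : forall n, (5 * ell n + fib n = n * lucas n)%nat.
Proof.
  assert (K : forall n, (5 * ell n + fib n = n * lucas n)%nat /\ (5 * ell (S n) + fib (S n) = S n * lucas (S n))%nat).
  { induction n; [split; vm_compute; reflexivity|]. destruct IHn as [A B]. split; auto.
    rewrite ell_rec, fib_SS, lucas_SS. pose proof (luc_fib n). nia. }
  apply K.
Qed.

Lemma ellR : forall n, INR (ell n) = (INR n * INR (lucas n) - INR (fib n)) / 5.
Proof.
  intro n. pose proof (ell_nat n) as E. apply (f_equal INR) in E.
  rewrite plus_INR, !mult_INR in E. simpl (INR 5) in E. lra.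
Qed.

Definition s := sqrt 5.
Definition ps := (1 - s) / 2.

Lemma s_sq : s * s = 5. Proof. apply sqrt_sqrt; lra. Qed.
Lemma s_pos : 0 < s. Proof. apply sqrt_lt_R0; lra. Qed.
Lemma s_gt1 : 1 < s. Proof. pose proof s_sq; pose proof s_pos; nra. Qed.
Lemma phi_sq : phi * phi = phi + 1. Proof. unfold phi; fold s. pose proof s_sq. nra. Qed.
Lemma ps_sq : ps * ps = ps + 1. Proof. unfold ps. pose proof s_sq. nra. Qed.
Lemma phi_ps : phi * ps = -1. Proof. unfold phi, ps; fold s. pose proof s_sq. nra. Qed.
Lemma phi_gt1 : 1 < phi. Proof. unfold phi; fold s. pose proof s_gt1. lra. Qed.
Lemma ps_bounds : -1 < ps < 0.
Proof. unfold ps. pose proof s_gt1. pose proof s_sq. split; nra. Qed.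

Lemma fibR : forall n, INR (fib (S (S n))) = INR (fib (S n)) + INR (fib n).
Proof. intro; rewrite fib_SS, plus_INR; reflexivity. Qed.
Lemma lucR : forall n, INR (lucas (S (S n))) = INR (lucas (S n)) + INR (lucas n).
Proof. intro; rewrite lucas_SS, plus_INR; reflexivity. Qed.

Lemma binet : forall n, s * INR (fib n) = phi ^ n - ps ^ n /\ INR (lucas n) = phi ^ n + ps ^ n.
Proof.
  assert (K : forall n, (s * INR (fib n) = phi ^ n - ps ^ n /\ INR (lucas n) = phi ^ n + ps ^ n) /\
     (s * INR (fib (S n)) = phi ^ (S n) - ps ^ (S n) /\ INR (lucas (S n)) = phi ^ (S n) + ps ^ (S n))).
  { induction n.
    - simpl. unfold phi, ps; fold s. split; split; lra.
    - destruct IHn as [[A1 A2] [B1 B2]]. split; [split; auto|].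
      rewrite fibR, lucR. cbn [pow] in *. pose proof phi_sq. pose proof ps_sq.
      split.
      + rewrite Rmult_plus_distr_l, A1, B1.
        replace (phi * (phi * phi ^ n)) with ((phi * phi) * phi ^ n) by ring.
        replace (ps * (ps * ps ^ n)) with ((ps * ps) * ps ^ n) by ring.
        rewrite H, H0. ring.
      + rewrite A2, B2.
        replace (phi * (phi * phi ^ n)) with ((phi * phi) * phi ^ n) by ring.
        replace (ps * (ps * ps ^ n)) with ((ps * ps) * ps ^ n) by ring.
        rewrite H, H0. ring. }
  apply K.
Qed.

Lemma fib_pos : forall n, (1 <= fib (S n))%nat.
Proof.
  assert (K : forall n, (1 <= fib (S n))%nat /\ (1 <= fib (S (S n)))%nat).
  { induction n; [split; vm_compute; lia|]. destruct IHn; split; auto. rewrite fib_SS. lia. }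
  apply K.
Qed.

Definition q := ps / phi.
Lemma q_phi : q * phi = ps. Proof. unfold q. pose proof phi_gt1. field. lra. Qed.
Lemma q_abs : Rabs q < 1.
Proof.
  pose proof q_phi. pose proof phi_gt1. pose proof ps_bounds. pose proof phi_ps.
  apply Rabs_def1; nra.
Qed.

Lemma ps_pow : forall n, ps ^ n = q ^ n * phi ^ n.
Proof. intro; rewrite <- Rpow_mult_distr, q_phi; reflexivity. Qed.

Definition u (n : nat) := 1 + q ^ n - (1 - q ^ n) * / s * / INR n.

Lemma u_lim : is_lim_seq u 1.
Proof.
  unfold u. pose proof (is_lim_seq_geom q q_abs) as G.
  enough (Hl : is_lim_seq (fun n => 1 + q ^ n - (1 - q ^ n) * / s * / INR n) (1 + 0 - (1 - 0) * / s * 0))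
    by (replace (1 + 0 - (1 - 0) * / s * 0) with 1 in Hl by ring; exact Hl).
  apply is_lim_seq_minus'; [apply is_lim_seq_plus'; auto; apply is_lim_seq_const|].
  apply is_lim_seq_mult'; [|apply lim_inv_n].
  apply is_lim_seq_mult'; [|apply is_lim_seq_const].
  apply is_lim_seq_minus'; auto; apply is_lim_seq_const.
Qed.

Lemma part3 : asymp (fun n => INR (ell n)) (fun n => INR n / 5 * phi ^ n).
Proof.
  unfold asymp. apply is_lim_seq_Reals.
  apply (is_lim_seq_ext_loc u); [|apply u_lim].
  exists 1%nat. intros n Hn.
  destruct (binet n) as [B1 B2]. rewrite ps_pow in B1, B2.
  assert (Hn0 : INR n <> 0) by (apply not_0_INR; lia).
  assert (HP : phi ^ n <> 0) by (apply pow_nonzero; pose proof phi_gt1; lra).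
  pose proof s_pos.
  rewrite ellR, B2. replace (INR (fib n)) with ((phi ^ n - q ^ n * phi ^ n) / s)
    by (rewrite <- B1; field; lra).
  unfold u. field. repeat split; lra.
Qed.

Lemma part4 : asymp iF (fun n => INR n / (sqrt 5 * phi)).
Proof.
  unfold asymp. apply is_lim_seq_Reals. fold s.
  apply (is_lim_seq_ext_loc (fun n => u n / (1 - q * q ^ n))).
  2: { enough (Hl : is_lim_seq (fun n => u n / (1 - q * q ^ n)) (1 / (1 - q * 0)))
         by (replace (1 / (1 - q * 0)) with 1 in Hl by field; exact Hl).
       apply is_lim_seq_div'; [apply u_lim| |lra].
       apply is_lim_seq_minus'; [apply is_lim_seq_const|].
       replace 0 with (q * 0) at 2 by ring.
       apply is_lim_seq_scal_l with (lu := Finite 0), is_lim_seq_geom, q_abs. }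
  exists 1%nat. intros n Hn. unfold iF. rewrite card_fib.
  destruct (binet n) as [B1 B2]. destruct (binet (S n)) as [C1 _].
  rewrite ps_pow in B1, B2, C1.
  assert (Hn0 : INR n <> 0) by (apply not_0_INR; lia).
  assert (HP : phi ^ n <> 0) by (apply pow_nonzero; pose proof phi_gt1; lra).
  pose proof s_pos. pose proof phi_gt1.
  assert (HF1 : INR (fib (S n)) <> 0) by (apply not_0_INR; pose proof (fib_pos n); lia).
  assert (Hq : 1 - q * q ^ n <> 0).
  { intro Z. apply HF1. cbn [pow] in C1.
    assert (s * INR (fib (S n)) = phi * phi ^ n * (1 - q * q ^ n)) by (rewrite C1; ring).
    rewrite Z, Rmult_0_r in H1. apply (Rmult_eq_reg_l s); lra. }
  cbn [pow] in C1.
  assert (HF1e : INR (fib (S n)) = phi * phi ^ n * (1 - q * q ^ n) / s)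
    by (apply (Rmult_eq_reg_l s); [rewrite C1; field; lra | lra]).
  rewrite HF1e.
  rewrite ellR, B2. replace (INR (fib n)) with ((phi ^ n - q ^ n * phi ^ n) / s)
    by (rewrite <- B1; field; lra).
  unfold u. rewrite <- s_sq. field. repeat split; lra.
Qed.


Definition FF (n : nat) := INR (fib n).
Definition EE (n : nat) := INR (ell n).

Lemma Gsum : forall x N, (1 - x - x^2) * sum_f_R0 (fun n => FF n * x ^ n) N =
  x - FF (S N) * x ^ (S N) - FF N * x ^ (S (S N)).
Proof.
  intros x N. induction N.
  - unfold FF; simpl. ring.
  - change (sum_f_R0 (fun n => FF n * x ^ n) (S N)) with
      (sum_f_R0 (fun n => FF n * x ^ n) N + FF (S N) * x ^ (S N)).
    rewrite Rmult_plus_distr_l, IHN. unfold FF. rewrite (fibR N). cbn [pow]. ring.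
Qed.

Lemma Esum : forall x N, (1 - x - x^2) * sum_f_R0 (fun n => EE n * x ^ n) N =
  x * sum_f_R0 (fun n => FF n * x ^ n) N - EE (S N) * x ^ (S N) - EE N * x ^ (S (S N)).
Proof.
  intros x N. induction N.
  - unfold FF, EE. rewrite ell0, ell1. simpl. ring.
  - change (sum_f_R0 (fun n => EE n * x ^ n) (S N)) with
      (sum_f_R0 (fun n => EE n * x ^ n) N + EE (S N) * x ^ (S N)).
    change (sum_f_R0 (fun n => FF n * x ^ n) (S N)) with
      (sum_f_R0 (fun n => FF n * x ^ n) N + FF (S N) * x ^ (S N)).
    rewrite Rmult_plus_distr_l, IHN. unfold EE. rewrite (ell_rec N), !plus_INR. fold (FF (S N)).
    cbn [pow]. ring.
Qed.

Lemma geom_ok : forall x, Rabs x < / phi -> Rabs (phi * x) < 1 /\ Rabs (ps * x) < 1.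
Proof.
  intros x Hx. pose proof phi_gt1. pose proof ps_bounds.
  assert (Hp : 0 < phi) by lra.
  split.
  - rewrite Rabs_mult, Rabs_pos_eq by lra.
    apply (Rmult_lt_compat_l phi) in Hx; auto. rewrite Rinv_r in Hx; lra.
  - rewrite Rabs_mult. assert (Rabs ps < 1) by (apply Rabs_def1; lra).
    assert (/ phi < 1) by (rewrite <- Rinv_1; apply Rinv_lt_contravar; lra).
    pose proof (Rabs_pos ps). pose proof (Rabs_pos x). nra.
Qed.

Lemma Flim : forall x, Rabs x < / phi -> is_lim_seq (fun n => FF n * x ^ n) 0.
Proof.
  intros x Hx. destruct (geom_ok x Hx) as [G1 G2]. pose proof s_pos.
  apply (is_lim_seq_ext (fun n => ((phi * x) ^ n - (ps * x) ^ n) / s)).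
  - intro n. destruct (binet n) as [B _]. rewrite !Rpow_mult_distr. unfold FF.
    rewrite <- Rmult_minus_distr_r, <- B. field. lra.
  - replace (Finite 0) with (Finite ((0 - 0) / s)) by (f_equal; field; lra).
    apply is_lim_seq_div'; [|apply is_lim_seq_const|lra].
    apply is_lim_seq_minus'; apply is_lim_seq_geom; auto.
Qed.

Lemma Elim : forall x, Rabs x < / phi -> is_lim_seq (fun n => EE n * x ^ n) 0.
Proof.
  intros x Hx. destruct (geom_ok x Hx) as [G1 G2]. pose proof s_pos.
  apply (is_lim_seq_ext (fun n => (INR n * (phi * x) ^ n + INR n * (ps * x) ^ n - FF n * x ^ n) / 5)).
  - intro n. destruct (binet n) as [_ B]. rewrite !Rpow_mult_distr. unfold EE.
    rewrite ellR, B. unfold FF. field.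
  - replace (Finite 0) with (Finite ((0 + 0 - 0) / 5)) by (f_equal; field).
    apply is_lim_seq_div'; [|apply is_lim_seq_const|lra].
    apply is_lim_seq_minus'; [apply is_lim_seq_plus'; apply nlim; auto|apply Flim; auto].
Qed.

Lemma part1 : forall x : R, Rabs x < / phi ->
     infinite_sum (fun n => INR (ell n) * x ^ n) (x ^ 2 / (1 - x - x ^ 2) ^ 2).
Proof.
  intros x Hx.
  assert (Hc : 0 < 1 - x - x^2).
  { pose proof phi_gt1. pose proof phi_sq.
    assert (E : / phi = phi - 1) by (field_simplify_eq; [nra | lra]).
    rewrite E in Hx. apply Rabs_def2 in Hx. destruct Hx. nra. }
  set (c := 1 - x - x^2) in *.
  assert (L : is_lim_seq (sum_f_R0 (fun n => EE n * x ^ n)) (x ^ 2 / c ^ 2)).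
  { apply (is_lim_seq_ext (fun N => (x * ((x - FF (S N) * x ^ (S N) - x^2 * (FF N * x ^ N)) / c)
                                      - EE (S N) * x ^ (S N) - x^2 * (EE N * x ^ N)) / c)).
    - intro N. assert (HG := Gsum x N). assert (HE := Esum x N). fold c in HG, HE.
      apply (Rmult_eq_reg_l c); [|lra]. rewrite HE.
      replace (x - FF (S N) * x ^ (S N) - x^2 * (FF N * x ^ N)) with (c * sum_f_R0 (fun n => FF n * x ^ n) N)
        by (rewrite HG; cbn [pow]; ring).
      cbn [pow]. field. lra.
    - pose proof (Flim x Hx) as F. pose proof (Elim x Hx) as E.
      pose proof F as F1. apply is_lim_seq_incr_1 in F1.
      pose proof E as E1. apply is_lim_seq_incr_1 in E1.
      replace (x ^ 2 / c ^ 2) with ((x * ((x - 0 - x^2 * 0) / c) - 0 - x^2 * 0) / c) by (field; lra).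
      apply is_lim_seq_div'; [|apply is_lim_seq_const|lra].
      apply is_lim_seq_minus'; [apply is_lim_seq_minus'|].
      + apply is_lim_seq_scal_l with (lu := Finite ((x - 0 - x ^ 2 * 0) / c)).
        apply is_lim_seq_div'; [|apply is_lim_seq_const|lra].
        apply is_lim_seq_minus'; [apply is_lim_seq_minus'; [apply is_lim_seq_const|exact F1]|].
        apply is_lim_seq_scal_l with (lu := Finite 0); exact F.
      + exact E1.
      + apply is_lim_seq_scal_l with (lu := Finite 0); exact E. }
  apply is_lim_seq_Reals in L. exact L.
Qed.


Theorem mainTheorem16 :
  (forall x : R, Rabs x < / phi ->
     infinite_sum (fun n => INR (ell n) * x ^ n)
                  (x ^ 2 / (1 - x - x ^ 2) ^ 2)) /\
  (forall n : nat,
     INR (ell n) = (INR n * INR (lucas n) - INR (fib n)) / 5) /\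
  asymp (fun n => INR (ell n)) (fun n => INR n / 5 * phi ^ n) /\
  asymp iF (fun n => INR n / (sqrt 5 * phi)).
Proof.
  split; [exact part1|]. split; [exact ellR|]. split; [exact part3|exact part4].
Qed.
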